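(* Let $\pi\in H(\mathbb{Z})$ with $\pi\pi^*=p$ a prime, $p\ge 13$, and let $C$ be an $(n,k)$ linear code over $H(\mathbb{Z})_\pi$. If $C$ corrects all errors of Lipschitz weight $2$ or less, then $(p^2)^{n-k}\ge 32n^2+8n+1$.
   Context: $H(\mathbb{Z})=\{a_0+a_1e_1+a_2e_2+a_3e_3:a_i\in\mathbb{Z}\}$ (Lipschitz integers) with quaternion multiplication $e_1^2=e_2^2=e_3^2=-1$, $e_1e_2=-e_2e_1=e_3$, $e_3e_1=-e_1e_3=e_2$, $e_2e_3=-e_3e_2=e_1$; $q^*=a_0-a_1e_1-a_2e_2-a_3e_3$, $N(q)=qq^*$. Right congruence: $q_1\equiv_r q_2 \pmod\pi$ iff $q_1-q_2=\delta\pi$ for some $\delta\in H(\mathbb{Z})$; $H(\mathbb{Z})_\pi=H(\mathbb{Z})/H(\mathbb{Z})\pi$, which has $p^2$ elements. The Lipschitz weight of a class $\gamma$ is $\min\{|a_0|+|a_1|+|a_2|+|a_3| : a_0+a_1e_1+a_2e_2+a_3e_3\in\gamma\}$; the weight of a vector is the sum of the weights of its components. An $(n,k)$ linear code over $H(\mathbb{Z})_\pi$ is an additive subgroup $C\subseteq H(\mathbb{Z})_\pi^n$ such that $H(\mathbb{Z})_\pi^n/C$ has exactly $(p^2)^{n-k}$ cosets. $C$ corrects all errors of weight $t$ or less if all vectors of Lipschitz weight at most $t$ lie in pairwise distinct cosets of $C$. *)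

(* Defs.v *)
From Stdlib Require Import ZArith List Znumtheory.
Open Scope Z_scope.

(** Lipschitz integers a0 + a1 e1 + a2 e2 + a3 e3 *)
Record quat := Quat { q0 : Z; q1 : Z; q2 : Z; q3 : Z }.

Definition qconst (a : Z) : quat := Quat a 0 0 0.
Definition qzero : quat := qconst 0.

Definition qadd (x y : quat) : quat :=
  Quat (q0 x + q0 y) (q1 x + q1 y) (q2 x + q2 y) (q3 x + q3 y).
Definition qopp (x : quat) : quat := Quat (- q0 x) (- q1 x) (- q2 x) (- q3 x).
Definition qsub (x y : quat) : quat := qadd x (qopp y).

(** Hamilton product: e1^2=e2^2=e3^2=-1, e1e2=e3, e2e3=e1, e3e1=e2 *)
Definition qmul (a b : quat) : quat :=
  Quat (q0 a * q0 b - q1 a * q1 b - q2 a * q2 b - q3 a * q3 b)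
       (q0 a * q1 b + q1 a * q0 b + q2 a * q3 b - q3 a * q2 b)
       (q0 a * q2 b - q1 a * q3 b + q2 a * q0 b + q3 a * q1 b)
       (q0 a * q3 b + q1 a * q2 b - q2 a * q1 b + q3 a * q0 b).

Definition qconj (x : quat) : quat := Quat (q0 x) (- q1 x) (- q2 x) (- q3 x).

Definition rcongr (pi x y : quat) : Prop :=
  exists delta : quat, qsub x y = qmul delta pi.

Definition l1 (x : quat) : Z := Z.abs (q0 x) + Z.abs (q1 x) + Z.abs (q2 x) + Z.abs (q3 x).

(** [w] is the Lipschitz weight of the class of [x] in H(Z)_pi:
    the minimum of l1 over all representatives of the class. *)
Definition is_class_weight (pi x : quat) (w : Z) : Prop :=
  (exists y, rcongr pi y x /\ l1 y = w) /\
  (forall y, rcongr pi y x -> w <= l1 y).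

(** Vectors of length n: functions nat -> quat, only indices i < n matter.
    An element of H(Z)_pi^n is represented by a vector of lifts. *)
Definition vec := nat -> quat.
Definition vzero : vec := fun _ => qzero.
Definition vadd (u v : vec) : vec := fun i => qadd (u i) (v i).
Definition vopp (u : vec) : vec := fun i => qopp (u i).
Definition vsub (u v : vec) : vec := fun i => qsub (u i) (v i).

(** Equality in H(Z)_pi^n of the classes of u and v. *)
Definition vcongr (pi : quat) (n : nat) (u v : vec) : Prop :=
  forall i, (i < n)%nat -> rcongr pi (u i) (v i).

Fixpoint sum_upto (n : nat) (f : nat -> Z) : Z :=
  match n with O => 0 | S m => sum_upto m f + f m end.

Definition is_vec_weight (pi : quat) (n : nat) (u : vec) (W : Z) : Prop :=
  exists w : nat -> Z,
    (forall i, (i < n)%nat -> is_class_weight pi (u i) (w i)) /\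
    W = sum_upto n w.

(** A subset C of H(Z)_pi^n, given by the predicate on lifts (it must be
    compatible with the congruence), which is an additive subgroup. *)
Definition additive_subgroup (pi : quat) (n : nat) (C : vec -> Prop) : Prop :=
  (forall u v, vcongr pi n u v -> C u -> C v) /\
  C vzero /\
  (forall u v, C u -> C v -> C (vadd u v)) /\
  (forall u, C u -> C (vopp u)).

Definition num_cosets (pi : quat) (n : nat) (C : vec -> Prop) (m : Z) : Prop :=
  exists reps : list vec,
    Z.of_nat (length reps) = m /\
    (forall v, exists r, In r reps /\ C (vsub v r)) /\
    (forall i j, (i < length reps)%nat -> (j < length reps)%nat ->
       C (vsub (nth i reps vzero) (nth j reps vzero)) -> i = j).

Definition linear_code (pi : quat) (p : Z) (n k : nat) (C : vec -> Prop) : Prop :=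
  additive_subgroup pi n C /\ num_cosets pi n C ((p ^ 2) ^ Z.of_nat (n - k)).

Definition corrects (pi : quat) (n : nat) (C : vec -> Prop) (t : Z) : Prop :=
  forall u v Wu Wv,
    is_vec_weight pi n u Wu -> is_vec_weight pi n v Wv ->
    Wu <= t -> Wv <= t ->
    C (vsub u v) -> vcongr pi n u v.

(* Main.v *)
Require Import Defs.
From Stdlib Require Import ZArith Znumtheory.
From Stdlib Require Import List Lia FinFun.
Import ListNotations.
Open Scope Z_scope.

Definition nrm (x : quat) : Z := q0 x * q0 x + q1 x * q1 x + q2 x * q2 x + q3 x * q3 x.

Lemma nrm_mul a b : nrm (qmul a b) = nrm a * nrm b.
Proof. destruct a, b; unfold nrm, qmul; simpl; ring. Qed.

Lemma nrm_pi pi p : qmul pi (qconj pi) = qconst p -> nrm pi = p.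
Proof.
  intro H; apply (f_equal q0) in H; destruct pi; unfold nrm, qmul, qconj in *; simpl in *; lia.
Qed.

Lemma sq_small (a b c d : Z) :
  Z.abs a + Z.abs b + Z.abs c + Z.abs d <= 4 ->
  a*a+b*b+c*c+d*d >= 13 -> a*a+b*b+c*c+d*d = 16.
Proof.
  intros H1 H2.
  assert (Ea : a*a = Z.abs a * Z.abs a) by (destruct (Z.abs_spec a); lia).
  assert (Eb : b*b = Z.abs b * Z.abs b) by (destruct (Z.abs_spec b); lia).
  assert (Ec : c*c = Z.abs c * Z.abs c) by (destruct (Z.abs_spec c); lia).
  assert (Ed : d*d = Z.abs d * Z.abs d) by (destruct (Z.abs_spec d); lia).
  rewrite Ea, Eb, Ec, Ed in *.
  assert (0 <= Z.abs a) by apply Z.abs_nonneg. assert (0 <= Z.abs b) by apply Z.abs_nonneg.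
  assert (0 <= Z.abs c) by apply Z.abs_nonneg. assert (0 <= Z.abs d) by apply Z.abs_nonneg.
  set (A := Z.abs a) in *; set (B := Z.abs b) in *; set (C := Z.abs c) in *;
  set (D := Z.abs d) in *. clearbody A B C D.
  destruct (Z_le_gt_dec A 3); [destruct (Z_le_gt_dec B 3); [destruct (Z_le_gt_dec C 3);
    [destruct (Z_le_gt_dec D 3)|]|]|].
  - nia.
  - assert (A = 0) by lia; assert (B = 0) by lia; assert (C = 0) by lia; assert (D=4) by lia; subst; lia.
  - assert (A = 0) by lia; assert (B = 0) by lia; assert (D = 0) by lia; assert (C=4) by lia.
    subst; lia.
  - assert (A = 0) by lia; assert (C = 0) by lia; assert (D = 0) by lia; assert (B=4) by lia.
    subst; lia.
  - assert (B = 0) by lia; assert (C = 0) by lia; assert (D = 0) by lia; assert (A=4) by lia.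
    subst; lia.
Qed.

Lemma sq_small3 (a b c d : Z) :
  Z.abs a + Z.abs b + Z.abs c + Z.abs d <= 3 ->
  a*a+b*b+c*c+d*d <= 9.
Proof.
  intros H1.
  assert (Ea : a*a = Z.abs a * Z.abs a) by (destruct (Z.abs_spec a); lia).
  assert (Eb : b*b = Z.abs b * Z.abs b) by (destruct (Z.abs_spec b); lia).
  assert (Ec : c*c = Z.abs c * Z.abs c) by (destruct (Z.abs_spec c); lia).
  assert (Ed : d*d = Z.abs d * Z.abs d) by (destruct (Z.abs_spec d); lia).
  rewrite Ea, Eb, Ec, Ed in *.
  assert (0 <= Z.abs a) by apply Z.abs_nonneg. assert (0 <= Z.abs b) by apply Z.abs_nonneg.
  assert (0 <= Z.abs c) by apply Z.abs_nonneg. assert (0 <= Z.abs d) by apply Z.abs_nonneg.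
  nia.
Qed.

Lemma nrm_nonneg x : 0 <= nrm x.
Proof. unfold nrm; nia. Qed.

Lemma nrm_zero x : nrm x = 0 -> x = qzero.
Proof.
  destruct x as [a b c d]; unfold nrm, qzero, qconst; simpl; intro H.
  assert (a = 0) by nia; assert (b = 0) by nia; assert (c = 0) by nia; assert (d = 0) by nia.
  subst; reflexivity.
Qed.

Lemma qsub_zero x y : qsub x y = qzero -> x = y.
Proof.
  destruct x, y; unfold qsub, qadd, qopp, qzero, qconst; simpl; intro H; injection H; intros.
  f_equal; lia.
Qed.

Lemma quat_eq_dec (x y : quat) : {x = y} + {x <> y}.
Proof. decide equality; apply Z.eq_dec. Qed.

Section Pi.
Variables (pi : quat) (p : Z).
Hypothesis Hn : nrm pi = p.
Hypothesis Hp : prime p.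
Hypothesis H13 : 13 <= p.

Lemma cong_big x y : rcongr pi x y -> x <> y -> nrm (qsub x y) >= 13.
Proof.
  intros [d Hd] Hne. rewrite Hd, nrm_mul, Hn.
  destruct (Z.eq_dec (nrm d) 0) as [E|E].
  - exfalso; apply Hne, qsub_zero; rewrite Hd, (nrm_zero _ E).
    destruct pi; unfold qmul, qzero, qconst; simpl; f_equal; ring.
  - pose proof (nrm_nonneg d); nia.
Qed.

Lemma l1_sub x y : l1 (qsub x y) <= l1 x + l1 y.
Proof. destruct x, y; unfold l1, qsub, qadd, qopp; simpl; lia. Qed.

Lemma cong_small x y : rcongr pi x y -> l1 x <= 2 -> l1 y <= 2 -> x = y.
Proof.
  intros Hc Hx Hy. destruct (quat_eq_dec x y) as [E|E]; auto.
  exfalso. pose proof (cong_big _ _ Hc E) as Hb.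
  pose proof (l1_sub x y).
  destruct Hc as [d Hd].
  assert (Hm : nrm (qsub x y) = p * nrm d) by (rewrite Hd, nrm_mul, Hn; ring).
  pose proof (nrm_nonneg d) as Hd0.
  set (N := nrm d) in *; clearbody N.
  remember (qsub x y) as z. destruct z as [a b c e].
  unfold l1, nrm in *; simpl in *.
  pose proof (sq_small a b c e ltac:(lia) Hb) as H16.
  rewrite H16 in Hm.
  assert (N = 1) by (destruct (Z_le_gt_dec N 1); nia).
  assert (Hp16 : p = 16) by lia. rewrite Hp16 in Hp.
  apply prime_alt in Hp. destruct Hp as [_ Hp2]. apply (Hp2 2); [lia|].
  exists 8; reflexivity.
Qed.
End Pi.

Lemma l1_nonneg x : 0 <= l1 x.
Proof. unfold l1; lia. Qed.

Lemma nrm_le_l1 x : l1 x <= 3 -> nrm x <= 9.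
Proof. destruct x; unfold l1, nrm; simpl; apply sq_small3. Qed.

Lemma class_weight pi p x : nrm pi = p -> prime p -> 13 <= p ->
  l1 x <= 2 -> is_class_weight pi x (l1 x).
Proof.
  intros Hn Hp H13 Hx. split.
  - exists x; split; auto. exists qzero.
    destruct x, pi; unfold qsub, qadd, qopp, qmul, qzero, qconst; simpl; f_equal; ring.
  - intros y Hy. destruct (quat_eq_dec y x) as [E|E]; [subst; lia|].
    pose proof (cong_big pi p Hn H13 _ _ Hy E).
    assert (l1 (qsub y x) >= 4).
    { destruct (Z_le_gt_dec (l1 (qsub y x)) 3); [|lia].
      pose proof (nrm_le_l1 _ l). lia. }
    destruct x, y; unfold l1, qsub, qadd, qopp in *; simpl in *; lia.
Qed.

Definition W (w : nat) : list quat :=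
  match w with
  | O => [qzero]
  | 1%nat => [Quat 1 0 0 0; Quat (-1) 0 0 0; Quat 0 1 0 0; Quat 0 (-1) 0 0;
         Quat 0 0 1 0; Quat 0 0 (-1) 0; Quat 0 0 0 1; Quat 0 0 0 (-1)]
  | 2%nat => [Quat 2 0 0 0; Quat (-2) 0 0 0; Quat 0 2 0 0; Quat 0 (-2) 0 0;
         Quat 0 0 2 0; Quat 0 0 (-2) 0; Quat 0 0 0 2; Quat 0 0 0 (-2);
         Quat 1 1 0 0; Quat 1 (-1) 0 0; Quat (-1) 1 0 0; Quat (-1) (-1) 0 0;
         Quat 1 0 1 0; Quat 1 0 (-1) 0; Quat (-1) 0 1 0; Quat (-1) 0 (-1) 0;
         Quat 1 0 0 1; Quat 1 0 0 (-1); Quat (-1) 0 0 1; Quat (-1) 0 0 (-1);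
         Quat 0 1 1 0; Quat 0 1 (-1) 0; Quat 0 (-1) 1 0; Quat 0 (-1) (-1) 0;
         Quat 0 1 0 1; Quat 0 1 0 (-1); Quat 0 (-1) 0 1; Quat 0 (-1) 0 (-1);
         Quat 0 0 1 1; Quat 0 0 1 (-1); Quat 0 0 (-1) 1; Quat 0 0 (-1) (-1)]
  | _ => []
  end.

Lemma W_l1 w x : In x (W w) -> l1 x = Z.of_nat w.
Proof.
  destruct w as [|[|[|w]]]; simpl; intro H;
  repeat (destruct H as [H|H]; [subst; reflexivity|]); try contradiction.
Qed.

Lemma W_nodup w : NoDup (W w).
Proof.
  destruct w as [|[|[|w]]]; simpl; [| | |constructor];
  repeat (constructor; [simpl; intro H; repeat (destruct H as [H|H]; [discriminate|]); exact H|]);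
  constructor.
Qed.

Fixpoint sumL (l : list quat) : Z :=
  match l with [] => 0 | x :: r => l1 x + sumL r end.

Fixpoint V (n t : nat) {struct n} : list (list quat) :=
  match n with
  | O => match t with O => [[]] | _ => [] end
  | S m => flat_map (fun w => flat_map (fun x => map (cons x) (V m (t - w))) (W w))
                    (seq 0 (S t))
  end.

Lemma NoDup_flat_map {A B : Type} (f : A -> list B) (l : list A) :
  NoDup l -> (forall x, In x l -> NoDup (f x)) ->
  (forall x y z, In x l -> In y l -> In z (f x) -> In z (f y) -> x = y) ->
  NoDup (flat_map f l).
Proof.
  induction l as [|a l IH]; intros Hnd Hf Hd; simpl; [constructor|].
  inversion Hnd; subst.
  apply NoDup_app; [apply Hf; simpl; auto| apply IH; auto; [intros; apply Hf; simpl; auto|intros; eapply Hd; simpl; eauto]|].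
  intros z Hz Hz'. apply in_flat_map in Hz'. destruct Hz' as [y [Hy Hzy]].
  assert (a = y) by (eapply Hd; simpl; eauto). subst; contradiction.
Qed.

Lemma V_S m t : V (S m) t = flat_map (fun w => flat_map (fun x => map (cons x) (V m (t - w))) (W w))
                    (seq 0 (S t)).
Proof. reflexivity. Qed.

Lemma V_in n t l : In l (V n t) -> length l = n /\ sumL l = Z.of_nat t.
Proof.
  revert t l; induction n as [|m IH]; intros t l H; [simpl in H|rewrite V_S in H].
  - destruct t; simpl in H; [destruct H as [H|H]; [subst; simpl; lia|contradiction]|contradiction].
  - apply in_flat_map in H; destruct H as [w [Hw H]].
    apply in_flat_map in H; destruct H as [x [Hx H]].
    apply in_map_iff in H; destruct H as [l0 [E H]]. subst l.
    apply in_seq in Hw. apply IH in H. apply W_l1 in Hx.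
    simpl; split; [lia|]. rewrite Hx; lia.
Qed.

Lemma V_nodup n t : NoDup (V n t).
Proof.
  revert t; induction n as [|m IH]; intro t; [simpl|rewrite V_S].
  - destruct t; repeat constructor; simpl; auto.
  - apply NoDup_flat_map; [apply seq_NoDup| |].
    + intros w _. apply NoDup_flat_map; [apply W_nodup| |].
      * intros x _. apply FinFun.Injective_map_NoDup; [|apply IH].
        intros a b E; injection E; auto.
      * intros x y z _ _ Hx Hy. apply in_map_iff in Hx, Hy.
        destruct Hx as [a [Ea _]]; destruct Hy as [b [Eb _]]; subst z; injection Eb; auto.
    + intros w w' z _ _ Hz Hz'.
      apply in_flat_map in Hz, Hz'. destruct Hz as [x [Hx Hz]]; destruct Hz' as [x' [Hx' Hz']].
      apply in_map_iff in Hz, Hz'.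
      destruct Hz as [a [Ea _]]; destruct Hz' as [b [Eb _]]; subst z; injection Eb; intros; subst.
      apply W_l1 in Hx, Hx'. lia.
Qed.

Lemma len_fm (A : list quat) (B : list (list quat)) :
  length (flat_map (fun x => map (cons x) B) A) = (length A * length B)%nat.
Proof. induction A; simpl; auto. rewrite length_app, length_map, IHA; lia. Qed.

Lemma V_len0 n : length (V n 0) = 1%nat.
Proof. induction n; [reflexivity|]. rewrite V_S; cbn [seq flat_map Nat.sub].
  rewrite !length_app, !len_fm, IHn; reflexivity. Qed.

Lemma V_len1 n : length (V n 1) = (8 * n)%nat.
Proof.
  induction n; [reflexivity|]. rewrite V_S; cbn [seq flat_map Nat.sub].
  rewrite !length_app, !len_fm, V_len0, IHn; simpl. lia.
Qed.

Lemma V_len2 n : length (V n 2) = (32 * n * n)%nat.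
Proof.
  induction n; [reflexivity|]. rewrite V_S; cbn [seq flat_map Nat.sub].
  rewrite !length_app, !len_fm, V_len0, V_len1, IHn; simpl. lia.
Qed.

Definition vec_of (l : list quat) : vec := fun i => nth i l qzero.

Lemma sum_upto_shift m f : sum_upto (S m) f = f 0%nat + sum_upto m (fun i => f (S i)).
Proof. induction m; simpl in *; [lia|]. rewrite IHm; lia. Qed.

Lemma sum_vec l : sum_upto (length l) (fun i => l1 (nth i l qzero)) = sumL l.
Proof. induction l; [reflexivity|]. cbn [length]. rewrite sum_upto_shift. cbn [nth]. rewrite IHl. reflexivity. Qed.

Lemma sumL_nonneg l : 0 <= sumL l.
Proof. induction l; simpl; [lia|]. pose proof (l1_nonneg a); lia. Qed.

Lemma In_sumL x l : In x l -> l1 x <= sumL l.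
Proof.
  induction l; simpl; [contradiction|]. intros [H|H].
  - subst; pose proof (sumL_nonneg l); lia.
  - pose proof (l1_nonneg a); specialize (IHl H); lia.
Qed.

Definition Vall n := V n 0 ++ V n 1 ++ V n 2.

Lemma Vall_in n l : In l (Vall n) -> length l = n /\ sumL l <= 2.
Proof.
  unfold Vall; intro H; apply in_app_or in H; destruct H as [H|H];
  [|apply in_app_or in H; destruct H as [H|H]]; apply V_in in H; simpl in H; lia.
Qed.

Lemma Vall_nodup n : NoDup (Vall n).
Proof.
  unfold Vall. apply NoDup_app; [apply V_nodup|apply NoDup_app; [apply V_nodup|apply V_nodup|]|].
  - intros a H1 H2; apply V_in in H1, H2; simpl in *; lia.
  - intros a H1 H2; apply V_in in H1; apply in_app_or in H2;
    destruct H2 as [H2|H2]; apply V_in in H2; simpl in *; lia.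
Qed.

Lemma Vall_len n : length (Vall n) = (1 + 8 * n + 32 * n * n)%nat.
Proof. unfold Vall; rewrite !length_app, V_len0, V_len1, V_len2; lia. Qed.

Lemma pigeon {T : Type} (R : T -> nat -> Prop) (m : nat) (L : list T) :
  NoDup L ->
  (forall c, In c L -> exists i, (i < m)%nat /\ R c i) ->
  (forall c c' i, In c L -> In c' L -> R c i -> R c' i -> c = c') ->
  (length L <= m)%nat.
Proof.
  intros Hnd Hex Hinj.
  assert (exists li, length li = length L /\ NoDup li /\
            forall i, In i li -> (i < m)%nat /\ exists c, In c L /\ R c i) as [li [H1 [H2 H3]]].
  { induction L as [|c L IH]; [exists []; split; [reflexivity|split; [constructor|contradiction]]|].
    inversion Hnd; subst.
    destruct IH as [li [E1 [E2 E3]]]; auto.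
    { intros; apply Hex; simpl; auto. }
    { intros; eapply Hinj; simpl; eauto. }
    destruct (Hex c (or_introl eq_refl)) as [i [Hi Ri]].
    exists (i :: li); split; [simpl; auto|split].
    - constructor; auto. intro Hin. destruct (E3 i Hin) as [_ [c' [Hc' Rc']]].
      assert (c = c') by (eapply Hinj; simpl; eauto). subst; contradiction.
    - intros j [Hj|Hj]; [subst; split; auto; exists c; simpl; auto|].
      destruct (E3 j Hj) as [Hj1 [c' [Hc' Rc']]]; split; auto; exists c'; simpl; auto. }
  rewrite <- H1. rewrite <- (length_seq m 0). apply (NoDup_incl_length H2). intros i Hi; apply in_seq; destruct (H3 i Hi); lia.
Qed.

Theorem theorem10 (pi : quat) (p : Z) (n k : nat) (C : vec -> Prop) :
  qmul pi (qconj pi) = qconst p ->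
  prime p -> 13 <= p ->
  linear_code pi p n k C ->
  corrects pi n C 2 ->
  (p ^ 2) ^ Z.of_nat (n - k) >= 32 * (Z.of_nat n) ^ 2 + 8 * Z.of_nat n + 1.
Proof.
  intros Hpi Hp H13 [[Hcomp [H0 [Hadd Hopp]]] [reps [Hlen [Hcov _]]]] Hcor.
  pose proof (nrm_pi _ _ Hpi) as Hn.
  assert (vw : forall l, In l (Vall n) -> is_vec_weight pi n (vec_of l) (sumL l)).
  { intros l Hl. destruct (Vall_in _ _ Hl) as [Hl1 Hl2].
    exists (fun i => l1 (nth i l qzero)); split.
    - intros i Hi. apply (class_weight pi p); auto.
      assert (In (nth i l qzero) l) by (apply nth_In; lia).
      pose proof (In_sumL _ _ H); lia.
    - rewrite <- Hl1, sum_vec; reflexivity. }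
  assert (Hle : (length (Vall n) <= length reps)%nat).
  { apply pigeon with (R := fun l i => C (vsub (vec_of l) (nth i reps vzero))).
    - apply Vall_nodup.
    - intros c _. destruct (Hcov (vec_of c)) as [r [Hr Cr]].
      destruct (In_nth reps r vzero Hr) as [i [Hi Ei]]. exists i; subst; auto.
    - intros c c' i Hc Hc' R1 R2.
      assert (Cd : C (vsub (vec_of c) (vec_of c'))).
      { apply (Hcomp (vadd (vsub (vec_of c) (nth i reps vzero))
                           (vopp (vsub (vec_of c') (nth i reps vzero))))).
        - intros j _. exists qzero.
          unfold vadd, vopp, vsub, qsub, qadd, qopp, qmul, qzero, qconst; simpl; f_equal; ring.
        - apply Hadd; auto. }
      destruct (Vall_in _ _ Hc) as [Lc Sc]. destruct (Vall_in _ _ Hc') as [Lc' Sc'].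
      pose proof (Hcor _ _ _ _ (vw c Hc) (vw c' Hc') Sc Sc' Cd) as Hv.
      apply nth_ext with (d := qzero) (d' := qzero); [lia|].
      intros j Hj. apply (cong_small pi p Hn Hp H13).
      + apply Hv; lia.
      + pose proof (In_sumL _ _ (nth_In c qzero Hj)); lia.
      + assert (In (nth j c' qzero) c') by (apply nth_In; lia).
        pose proof (In_sumL _ _ H); lia. }
  rewrite Vall_len in Hle. rewrite <- Hlen.
  apply Nat2Z.inj_le in Hle. rewrite !Nat2Z.inj_add, !Nat2Z.inj_mul in Hle.
  rewrite Z.pow_2_r. lia.
Qed.
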